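(* The map $\mathrm{Trns}_\mu$, restricted to $\Lambda_W^\mu\times\mathcal A$, is injective.
   Context: Let $\underline{G}=(\mathrm{Res}_{\mathbb{F}_{p^f}/\mathbb{F}_p}\mathrm{GL}_3)\times\mathbb{F}\cong\mathrm{GL}_3^f$ with diagonal torus $\underline T$, $X^*(\underline T)\cong(\mathbb{Z}^3)^f$, $\eta=((1,0,-1))_i$, $\pi$ the Frobenius shift $(\pi\lambda)_i=\lambda_{i-1}$, $\mu\in X^*(\underline T)$. Let $\Lambda_W\supset\Lambda_R$ be the weight and root lattices of $\mathrm{SL}_3^f$, $\lambda\mapsto\overline\lambda$ restriction $X^*(\underline T)\to\Lambda_W$ with kernel $X^0(\underline T)$, $\mathrm{can}$ the canonical embedding of $\Lambda_R$ in $X^*(\underline T)$ (characters trivial on the center), $\mathrm{sec}:\Lambda_W\to X^*(\underline T)$ a section. Using the $p$-dot action $t_\lambda w\cdot\mu=p\lambda+w(\mu+\eta)-\eta$, let $\underline A$ be the lowest dominant $p$-restricted alcove, $\mathcal A=\{A,B\}^f$ the dominant $p$-restricted alcoves, $\widetilde{\underline W}^{+,\mathrm{der}}_1$ the elements $wt_{-\pi^{-1}\omega}$ of $\Lambda_W\rtimes S_3^f$ taking $\underline A$ into $\mathcal A$. Writing uniquely elements of $\Lambda_W\times\mathcal A$ as $(\omega+\nu,\pi wt_{-\pi^{-1}\omega}\cdot\underline A)$ with $\nu\in\Lambda_R$, define $\mathrm{Trns}_\mu(\omega+\nu,\pi wt_{-\pi^{-1}\omega}\cdot\underline A)=wt_{-\pi^{-1}\mathrm{sec}(\omega)}\cdot(\mu-\eta+\mathrm{can}(\nu)+\mathrm{sec}(\omega))\in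 X^*(\underline T)/(p-\pi)X^0(\underline T)$, and $\Lambda_W^\mu=\{\omega\in\Lambda_W:\omega+\overline{\mu-\eta}\in\underline A\}$. *)

(* Defs.v *)
From HB Require Import structures.
From mathcomp Require Import all_boot all_order all_algebra all_fingroup.
Set Implicit Arguments. Unset Strict Implicit. Unset Printing Implicit Defensive.
Import Order.TTheory GRing.Theory Num.Theory.
Local Open Scope ring_scope.

(* X^*(T) for GL_3^f (with coefficients in R): f x 3 matrices, row i is the
   i-th GL_3 factor.  X^*(T) itself is R = int; X^*(T) (x) Q is R = rat. *)
Notation Xc R f := 'M[R]_(f, 3).

Definition i0 : 'I_3 := @Ordinal 3 0 isT.
Definition i1 : 'I_3 := @Ordinal 3 1 isT.
Definition i2 : 'I_3 := @Ordinal 3 2 isT.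

Definition eta {R : pzRingType} (f : nat) : Xc R f :=
  \matrix_(i < f, j < 3) (1 - (nat_of_ord j)%:R).

(* Frobenius shift (pi lam)_i = lam_{i-1} (indices mod f) and its inverse *)
Definition piM {R : pzRingType} (f : nat) (A : Xc R f) : Xc R f :=
  \matrix_(i < f, j < 3) A (ord_pred i) j.
Definition piinv {R : pzRingType} (f : nat) (A : Xc R f) : Xc R f :=
  \matrix_(i < f, j < 3) A (ordS i) j.

(* S_3^f acting on X^*(T): w permutes the coordinates of each factor,
   (w lam)_{i, w_i(j)} = lam_{i,j} *)
Definition Wf (f : nat) := {ffun 'I_f -> 'S_3}.
Definition wact {R : pzRingType} (f : nat) (w : Wf f) (A : Xc R f) : Xc R f :=
  \matrix_(i < f, j < 3) A i ((w i)^-1%g j).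

(* p-dot action of the element  w t_nu :
   w t_nu . x = w (t_nu . x) = w(p nu + x + eta) - eta *)
Definition wt_dot {R : pzRingType} (p f : nat) (w : Wf f) (nu x : Xc R f)
  : Xc R f :=
  wact w (p%:R *: nu + x + eta f) - eta f.

(* X^0(T): kernel of the restriction X^*(T) -> Lambda_W, i.e. characters
   constant on each factor (multiples of (1,1,1) in each factor). *)
Definition inX0 {R : pzRingType} (f : nat) (d : Xc R f) : Prop :=
  forall (i : 'I_f) (j k : 'I_3), d i j = d i k.

(* Elements of Lambda_W are represented by lifts in X^*(T); two lifts
   represent the same element of Lambda_W iff they differ by X^0(T). *)
Definition eqLW (f : nat) (a b : Xc int f) : Prop := inX0 (a - b).

(* Characters trivial on the center of GL_3^f: the image of can : Lambda_R -> X^*(T) *)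
Definition trivial_on_center (f : nat) (nu : Xc int f) : Prop :=
  forall i : 'I_f, \sum_(j < 3) nu i j = 0.

(* Equality in X^*(T) / (p - pi) X^0(T) *)
Definition eq_mod_pX0 (p f : nat) (a b : Xc int f) : Prop :=
  exists d : Xc int f, inX0 d /\ a - b = p%:Z *: d - piM d.

(* Alcoves (p-dot action), as sets of rational points of X^*(T) (x) Q
   (they are invariant under X^0 (x) Q, so they are alcoves of Lambda_W (x) Q).
   Lowest alcove A (in factor i): 0 < <x+eta, a1^v>, 0 < <x+eta, a2^v>,
   <x+eta, a0^v> < p;  upper restricted alcove B:  <x+eta,a1^v> < p,
   <x+eta,a2^v> < p, p < <x+eta,a0^v>.  (a1 = e1-e2, a2 = e2-e3, a0 = e1-e3) *)
Definition lowerA (p f : nat) (i : 'I_f) (x : Xc rat f) : Prop :=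
  let y := x + eta f in
  0 < y i i0 - y i i1 /\ 0 < y i i1 - y i i2 /\ y i i0 - y i i2 < p%:R.
Definition upperB (p f : nat) (i : 'I_f) (x : Xc rat f) : Prop :=
  let y := x + eta f in
  y i i0 - y i i1 < p%:R /\ y i i1 - y i i2 < p%:R /\ p%:R < y i i0 - y i i2.

(* The alcove of \mathcal A = {A,B}^f indexed by c (c i = true means B). *)
Definition alc (p f : nat) (c : {ffun 'I_f -> bool}) (x : Xc rat f) : Prop :=
  forall i : 'I_f, if c i then upperB p i x else lowerA p i x.

Definition lowest_alc (p f : nat) : Xc rat f -> Prop := alc p [ffun _ => false].

Definition image_is (T : Type) (g : T -> T) (P Q : T -> Prop) : Prop :=
  forall x, Q x <-> exists y, P y /\ x = g y.

Definition wt_elt (p f : nat) (w : Wf f) (om : Xc int f) : Xc rat f -> Xc rat f :=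
  wt_dot p w (map_mx intr (- piinv om)).

(* w t_{-pi^{-1} om} lies in \widetilde W^{+,der}_1 : it takes \underline A into \mathcal A *)
Definition in_Wtilde1 (p f : nat) (w : Wf f) (om : Xc int f) : Prop :=
  exists c' : {ffun 'I_f -> bool},
    image_is (wt_elt p w om) (@lowest_alc p f) (alc p c').

(* (om', C) = (om + nu, pi w t_{-pi^{-1} om} . \underline A) with
   nu in Lambda_R (here given directly through can(nu) in X^*(T)) and
   w t_{-pi^{-1} om} in \widetilde W^{+,der}_1. *)
Definition Trns_decomp (p f : nat) (om' : Xc int f) (c : {ffun 'I_f -> bool})
  (w : Wf f) (om nu : Xc int f) : Prop :=
  [/\ trivial_on_center nu, eqLW om' (om + nu), in_Wtilde1 p w om
    & image_is (fun y => piM (wt_elt p w om y)) (@lowest_alc p f) (alc p c)].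

(* Trns_mu value for such a decomposition (a representative in X^*(T) of
   its class in X^*(T) / (p - pi) X^0(T)):
   w t_{-pi^{-1} sec(om)} . (mu - eta + can(nu) + sec(om)) *)
Definition Trns_val (p f : nat) (mu : Xc int f) (sec : Xc int f -> Xc int f)
  (w : Wf f) (om nu : Xc int f) : Xc int f :=
  wt_dot p w (- piinv (sec om)) (mu - eta f + nu + sec om).

Definition in_LambdaW_mu (p f : nat) (mu om : Xc int f) : Prop :=
  @lowest_alc p f (map_mx intr (om + mu - eta f)).

(* Main.v *)
Require Import Defs.
From HB Require Import structures.
From mathcomp Require Import all_boot all_order all_algebra all_fingroup zify ring lra.
Import Order.TTheory GRing.Theory Num.Theory.
Local Open Scope ring_scope.

Lemma ord3 (k : 'I_3) : k = i0 \/ k = i1 \/ k = i2.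
Proof.
case: k => [[|[|[|n]]] Hk].
- by left; apply: val_inj.
- by right; left; apply: val_inj.
- by right; right; apply: val_inj.
- by [].
Qed.

Lemma mulp_cases (p k : int) : 0 < p ->
  p * k <= - p \/ (k = 0 /\ p * k = 0) \/ (k = 1 /\ p * k = p) \/ 2 * p <= p * k.
Proof.
move=> hp.
have [hk|[->|[->|hk]]] : k <= -1 \/ k = 0 \/ k = 1 \/ 2 <= k by lia.
- left; nia.
- by right; left; rewrite mulr0.
- by right; right; left; rewrite mulr1.
- right; right; right; nia.
Qed.

Ltac noninj inj e0 e1 e2 :=
  first [ have /(congr1 val) /eqP // := inj _ _ (etrans e0 (esym e1))
        | have /(congr1 val) /eqP // := inj _ _ (etrans e0 (esym e2))
        | have /(congr1 val) /eqP // := inj _ _ (etrans e1 (esym e2)) ].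

Lemma perm_sum3 (a : 'S_3) (F : 'I_3 -> int) :
  F (a i0) + F (a i1) + F (a i2) = F i0 + F i1 + F i2.
Proof.
have inj := @perm_inj _ a.
case: (ord3 (a i0)) => [e0|[e0|e0]]; case: (ord3 (a i1)) => [e1|[e1|e1]];
case: (ord3 (a i2)) => [e2|[e2|e2]]; rewrite ?e0 ?e1 ?e2;
  try noninj inj e0 e1 e2; lia.
Qed.

Lemma row_key (p : int) (a b : 'S_3) (l1 l2 y1 y2 : 'I_3 -> int) (C q : int) :
  0 < p ->
  y1 i1 < y1 i0 -> y1 i2 < y1 i1 -> y1 i0 - y1 i2 < p ->
  y2 i1 < y2 i0 -> y2 i2 < y2 i1 -> y2 i0 - y2 i2 < p ->
  (forall j, p * l1 (a j) + y1 (a j) - (p * l2 (b j) + y2 (b j)) = C) ->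
  (l1 i0 + l1 i1 + l1 i2) - (l2 i0 + l2 i1 + l2 i2) = 3 * q ->
  y1 i1 - y2 i1 = y1 i0 - y2 i0 /\ y1 i2 - y2 i2 = y1 i0 - y2 i0.
Proof.
move=> hp h1 h2 h3 h4 h5 h6 H Hq.
have E : forall j, p * l1 (a (b^-1%g j)) + y1 (a (b^-1%g j)) - (p * l2 j + y2 j) = C.
  by move=> j; have := H (b^-1%g j); rewrite permKV.
have inj : injective (fun j => a (b^-1%g j)).
  by move=> x y /perm_inj /perm_inj.
have E0 := E i0; have E1 := E i1; have E2 := E i2.
move: inj E0 E1 E2; set u0 := a _; set u1 := a _; set u2 := a _ => inj E0 E1 E2.
have c01 := @mulp_cases p (l1 u0 - l2 i0 - (l1 u1 - l2 i1)) hp.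
have c12 := @mulp_cases p (l1 u1 - l2 i1 - (l1 u2 - l2 i2)) hp.
have c02 := @mulp_cases p (l1 u0 - l2 i0 - (l1 u2 - l2 i2)) hp.
case: (ord3 u0) => [e0|[e0|e0]]; case: (ord3 u1) => [e1|[e1|e1]];
case: (ord3 u2) => [e2|[e2|e2]]; rewrite ?e0 ?e1 ?e2 in E0 E1 E2 c01 c12 c02;
  try noninj inj e0 e1 e2; lia.
Qed.
Lemma cyc_zero f (p : nat) (v : 'I_f -> int) : (1 < p)%N ->
  (forall i, v i = p%:Z * v (ordS i)) -> forall i, v i = 0.
Proof.
move=> hp H.
have D : forall n i, (p ^ n %| `|v i|)%N.
  elim => [|n IH] i; first by rewrite expn0 dvd1n.
  by rewrite (H i) abszM expnS absz_nat dvdn_mul.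
move=> i; apply/eqP; rewrite -absz_eq0; apply/negPn/negP; rewrite -lt0n => nz.
have := dvdn_leq nz (D `|v i|%N i); by rewrite leqNgt ltn_expl.
Qed.

Lemma eta_map f : map_mx intr (Defs.eta f) = Defs.eta f :> Xc rat f.
Proof. apply/matrixP => i j; rewrite !mxE. by rewrite intrB mulrz_nat. Qed.

Lemma wt_dot_map p f (w : Wf f) (nu x : Xc int f) :
  map_mx intr (wt_dot p w nu x) = wt_dot p w (map_mx intr nu) (map_mx intr x) :> Xc rat f.
Proof.
apply/matrixP => i j; rewrite /wt_dot /wact !mxE.
by rewrite !(intrD, intrN, intrM, intrB, mulrz_nat).
Qed.

Lemma lowA_int p f (x : Xc int f) i : lowest_alc p (map_mx intr x) ->
  forall a b c : int, a = (x + Defs.eta f) i i0 -> b = (x + Defs.eta f) i i1 ->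
  c = (x + Defs.eta f) i i2 ->
  0 < a - b /\ 0 < b - c /\ a - c < p%:Z.
Proof.
move/(_ i); rewrite ffunE /lowerA.
have e : forall j, (map_mx intr x + Defs.eta f) i j = ((x + Defs.eta f) i j)%:~R :> rat.
  by move=> j; rewrite !mxE intrD; congr (_ + _); rewrite intrB mulrz_nat.
move=> H a b c -> -> ->; move: H.
rewrite !e -!intrB -[p%:R]/((p%:Z)%:~R) !ltr0z !ltr_int.
by [].
Qed.

Lemma alc_shift p f c1 c2 (z1 z2 : Xc rat f) : alc p c1 z1 -> alc p c2 z2 ->
  (forall i j, z1 i j - z2 i j = z1 i i0 - z2 i i0) -> c1 = c2.
Proof.
move=> H1 H2 H; apply/ffunP => i.
have := H1 i; have := H2 i; have e1 := H i i1; have e2 := H i i2.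
rewrite /upperB /lowerA !mxE.
case: (c1 i); case: (c2 i) => //= ha hb; exfalso; lra.
Qed.

Lemma sum3 (F : 'I_3 -> int) : \sum_(j < 3) F j = F i0 + F i1 + F i2.
Proof.
rewrite !big_ord_recr big_ord0 /= add0r.
by congr (F _ + F _ + F _); apply: val_inj.
Qed.

Lemma Trns_valE p f mu (sec : Xc int f -> Xc int f) (w : Wf f) om nu i j :
  Trns_val p mu sec w om nu i j =
  - (p%:Z * sec om (ordS i) ((w i)^-1%g j)) +
  (mu i ((w i)^-1%g j) + nu i ((w i)^-1%g j) + sec om i ((w i)^-1%g j)) - (1 - j%:R).
Proof. rewrite /Trns_val /wt_dot /wact /piinv !mxE natz. ring. Qed.

Lemma TzE p f (w : Wf f) om x y i j :
  wt_dot p w (- piinv om) (x + y - Defs.eta f) i j =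
  - (p%:Z * om (ordS i) ((w i)^-1%g j)) + (x i ((w i)^-1%g j) + y i ((w i)^-1%g j)) - (1 - j%:R).
Proof. rewrite /wt_dot /wact /piinv !mxE natz. ring. Qed.

Lemma X0E f (A B : Xc int f) i j k : inX0 (A - B) ->
  (A i j : int) - B i j = A i k - B i k.
Proof. by move/(_ i j k); rewrite !mxE. Qed.

Lemma X0E2 f (A B C : Xc int f) i j k : inX0 (A - (B + C)) ->
  (A i j : int) - (B i j + C i j) = A i k - (B i k + C i k).
Proof. by move/(_ i j k); rewrite !mxE. Qed.

Lemma subE f (A B : Xc int f) i j : (A - B) i j = (A i j : int) - B i j.
Proof. by rewrite !mxE. Qed.

Lemma lowA_int2 p f (om mu : Xc int f) i :
  lowest_alc p (map_mx intr (om + mu - Defs.eta f)) ->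
  0 < (om i i0 + mu i i0 : int) - (om i i1 + mu i i1) /\
  0 < (om i i1 + mu i i1 : int) - (om i i2 + mu i i2) /\
  (om i i0 + mu i i0 : int) - (om i i2 + mu i i2) < p%:Z.
Proof.
move=> L; have := @lowA_int p f _ i L _ _ _ erefl erefl erefl.
by rewrite !mxE !subrK.
Qed.
Arguments X0E {f A B} i j k _.
Arguments X0E2 {f A B C} i j k _.

Lemma piM_map_entry f (Z : Xc int f) i j :
  piM (map_mx intr Z) i j = (Z (ord_pred i) j)%:~R :> rat.
Proof. by rewrite !mxE. Qed.

Ltac fixeq := repeat match goal with
  | H : @eq ?T ?a ?b |- _ => assert_fails (constr_eq T int); change (@eq int a b) in H
  | |- @eq ?T ?a ?b => assert_fails (constr_eq T int); change (@eq int a b)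
  end.
Ltac fixmx := repeat match goal with
 | H : context [@fun_of_matrix ?T ?m ?n ?A ?i ?j] |- _ =>
     assert_fails (constr_eq T int);
     change (@fun_of_matrix T m n A i j) with (@fun_of_matrix int m n A i j) in H
 | |- context [@fun_of_matrix ?T ?m ?n ?A ?i ?j] =>
     assert_fails (constr_eq T int);
     change (@fun_of_matrix T m n A i j) with (@fun_of_matrix int m n A i j)
 end.
Ltac zlia := intros; fixeq; fixmx; lia.

Theorem proposition2p5 (p f : nat) (mu : Xc int f)
  (sec : Xc int f -> Xc int f) :
  prime p -> (0 < f)%N ->
  (* sec is a well-defined map Lambda_W -> X^*(T) ... *)
  (forall om om' : Xc int f, eqLW om om' -> sec om = sec om') ->
  (* ... which is a section of the restriction X^*(T) -> Lambda_W *)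
  (forall om : Xc int f, eqLW (sec om) om) ->
  forall (om1' om2' : Xc int f) (c1 c2 : {ffun 'I_f -> bool})
         (w1 w2 : Wf f) (om1 om2 nu1 nu2 : Xc int f),
  in_LambdaW_mu p mu om1' -> in_LambdaW_mu p mu om2' ->
  Trns_decomp p om1' c1 w1 om1 nu1 ->
  Trns_decomp p om2' c2 w2 om2 nu2 ->
  eq_mod_pX0 p (Trns_val p mu sec w1 om1 nu1) (Trns_val p mu sec w2 om2 nu2) ->
  eqLW om1' om2' /\ c1 = c2.
Proof.
move=> pr _ _ hsec om1' om2' c1 c2 w1 w2 om1 om2 nu1 nu2 L1 L2
  [Hn1 He1 _ Hi1] [Hn2 He2 _ Hi2] [d [Hd HT]].
have p1 : (1 < p)%N by apply: prime_gt1.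
have p0 : 0 < p%:Z by rewrite ltz_nat ltnW.
have Hs1 : inX0 (sec om1 - om1) := hsec om1.
have Hs2 : inX0 (sec om2 - om2) := hsec om2.
set T1 := Trns_val p mu sec w1 om1 nu1 in HT.
set T2 := Trns_val p mu sec w2 om2 nu2 in HT.
have HX : forall i j, T1 i j - T2 i j = p%:Z * d i i0 - d (ord_pred i) i0.
  move=> i j; have := congr1 (fun M : Xc int f => M i j) HT; rewrite /= !mxE => ->.
  by rewrite (Hd i j i0) (Hd (ord_pred i) j i0).
pose RS (A : Xc int f) i := A i i0 + A i i1 + A i i2.
have sumT : forall (w : Wf f) om nu i, trivial_on_center nu ->
    Trns_val p mu sec w om nu i i0 + Trns_val p mu sec w om nu i i1
    + Trns_val p mu sec w om nu i i2 =
    - (p%:Z * RS (sec om) (ordS i)) + RS mu i + RS (sec om) i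
    - ((1 - (nat_of_ord i0)%:R) + (1 - (nat_of_ord i1)%:R) + (1 - (nat_of_ord i2)%:R)).
  move=> w om nu i Hn; rewrite !Trns_valE.
  pose F a := - (p%:Z * sec om (ordS i) a) + (mu i a + nu i a + sec om i a).
  have := perm_sum3 (w i)^-1%g F; rewrite /F /RS.
  have := Hn i; rewrite sum3. lia.
pose R i := RS (sec om1) i - RS (sec om2) i.
have HR : forall i, R i - p%:Z * R (ordS i) = 3 * (p%:Z * d i i0 - d (ord_pred i) i0).
  move=> i; have := sumT w1 om1 nu1 i Hn1; have := sumT w2 om2 nu2 i Hn2.
  rewrite -/T1 -/T2 /R.
  have := HX i i0; have := HX i i1; have := HX i i2. lia.
pose v i := R i + 3 * d (ord_pred i) i0.
have Hv : forall i, v i = 0.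
  apply: (@cyc_zero f p v p1) => i; rewrite /v ordSK.
  have := HR i. lia.
have Hrow : forall i, forall j,
    (mu i j + nu1 i j + sec om1 i j) - (mu i j + nu2 i j + sec om2 i j) =
    (mu i i0 + nu1 i i0 + sec om1 i i0) - (mu i i0 + nu2 i i0 + sec om2 i i0).
  move=> i.
  have [A1 [A2 A3]] := @lowA_int2 p f _ _ i L1.
  have [B1 [B2 B3]] := @lowA_int2 p f _ _ i L2.
  have X1 := fun j => X0E2 i j i0 He1; have X2 := fun j => X0E2 i j i0 He2.
  have Y1 := fun j => X0E i j i0 Hs1; have Y2 := fun j => X0E i j i0 Hs2.
  have h1 : (mu i i1 + nu1 i i1 + sec om1 i i1) < (mu i i0 + nu1 i i0 + sec om1 i i0) /\
            (mu i i2 + nu1 i i2 + sec om1 i i2) < (mu i i1 + nu1 i i1 + sec om1 i i1) /\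
            (mu i i0 + nu1 i i0 + sec om1 i i0) - (mu i i2 + nu1 i i2 + sec om1 i i2) < p%:Z.
    move: (X1 i1) (X1 i2) (Y1 i1) (Y1 i2). lia.
  have h2 : (mu i i1 + nu2 i i1 + sec om2 i i1) < (mu i i0 + nu2 i i0 + sec om2 i i0) /\
            (mu i i2 + nu2 i i2 + sec om2 i i2) < (mu i i1 + nu2 i i1 + sec om2 i i1) /\
            (mu i i0 + nu2 i i0 + sec om2 i i0) - (mu i i2 + nu2 i i2 + sec om2 i i2) < p%:Z.
    move: (X2 i1) (X2 i2) (Y2 i1) (Y2 i2). lia.
  have hH : forall j, p%:Z * - sec om1 (ordS i) ((w1 i)^-1%g j) + (mu i ((w1 i)^-1%g j) + nu1 i ((w1 i)^-1%g j) + sec om1 i ((w1 i)^-1%g j))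
      - (p%:Z * - sec om2 (ordS i) ((w2 i)^-1%g j) + (mu i ((w2 i)^-1%g j) + nu2 i ((w2 i)^-1%g j) + sec om2 i ((w2 i)^-1%g j)))
      = p%:Z * d i i0 - d (ord_pred i) i0.
    move=> j; have := HX i j; rewrite /T1 /T2 !Trns_valE. lia.
  have hq : (- sec om1 (ordS i) i0 + - sec om1 (ordS i) i1 + - sec om1 (ordS i) i2)
     - (- sec om2 (ordS i) i0 + - sec om2 (ordS i) i1 + - sec om2 (ordS i) i2) = 3 * d i i0.
    have := Hv (ordS i); rewrite /v /R /RS ordSK. lia.
  case: h1 => h11 [h12 h13]; case: h2 => h21 [h22 h23].
  have [r1 r2] := @row_key p%:Z (w1 i)^-1%g (w2 i)^-1%g
    (fun j => - sec om1 (ordS i) j) (fun j => - sec om2 (ordS i) j)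
    (fun j => mu i j + nu1 i j + sec om1 i j) (fun j => mu i j + nu2 i j + sec om2 i j)
    (p%:Z * d i i0 - d (ord_pred i) i0) (d i i0) p0 h11 h12 h13 h21 h22 h23 hH hq.
  move=> j; case: (ord3 j) => [->|[->|->]]; [by []| exact: r1 | exact: r2].
split.
- move=> i j k.
  have E : forall j, (om1' - om2') i j = (om1' - om2') i i0.
    move=> j'; rewrite !subE; have := Hrow i j'; have := X0E2 i j' i0 He1; have := X0E2 i j' i0 He2.
    have := X0E i j' i0 Hs1; have := X0E i j' i0 Hs2. lia.
  by rewrite E (E k).
- pose x1 := map_mx intr (om1' + mu - Defs.eta f) : Xc rat f.
  pose x2 := map_mx intr (om2' + mu - Defs.eta f) : Xc rat f.
  have Z1 := (Hi1 _).2 (ex_intro _ x1 (conj L1 erefl)).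
  have Z2 := (Hi2 _).2 (ex_intro _ x2 (conj L2 erefl)).
  apply: (@alc_shift p f c1 c2 _ _ Z1 Z2) => i j.
  rewrite /wt_elt /x1 /x2 -!wt_dot_map !piM_map_entry -!intrB; congr intr.
  rewrite !TzE.
  set i' := ord_pred i.
  have := HX i' j; have := HX i' i0; rewrite /T1 /T2 !Trns_valE.
  set a1 := (w1 i')^-1%g; set a2 := (w2 i')^-1%g.
  have := congr1 ( *%R p%:Z) (X0E (ordS i') (a1 j) i0 Hs1).
  have := congr1 ( *%R p%:Z) (X0E (ordS i') (a1 i0) i0 Hs1).
  have := congr1 ( *%R p%:Z) (X0E (ordS i') (a2 j) i0 Hs2).
  have := congr1 ( *%R p%:Z) (X0E (ordS i') (a2 i0) i0 Hs2).
  have := X0E2 i' (a1 j) i0 He1; have := X0E2 i' (a1 i0) i0 He1.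
  have := X0E2 i' (a2 j) i0 He2; have := X0E2 i' (a2 i0) i0 He2.
  have := X0E i' (a1 j) i0 Hs1; have := X0E i' (a1 i0) i0 Hs1.
  have := X0E i' (a2 j) i0 Hs2; have := X0E i' (a2 i0) i0 Hs2.
  zlia.
Qed.
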